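(* Let $q$ be a prime power, let $\mathcal{F}=(\mathcal{F}_1,\ldots,\mathcal{F}_r)$ be a flag on $\mathbb{F}_{q^n}$ and let $\beta\in\mathbb{F}_{q^n}^*$. The following are equivalent: (1) $\mathrm{Orb}_\beta(\mathcal{F})$ is a disjoint flag code; (2) $\mathrm{Stab}_\beta(\mathcal{F})=\mathrm{Stab}_\beta(\mathcal{F}_1)=\cdots=\mathrm{Stab}_\beta(\mathcal{F}_r)$; (3) $\mathrm{Stab}_\beta(\mathcal{F}_1)=\cdots=\mathrm{Stab}_\beta(\mathcal{F}_r)$.
   Context: A flag on $\mathbb{F}_{q^n}$ is a sequence $(\mathcal{F}_1,\ldots,\mathcal{F}_r)$ of $\mathbb{F}_q$-subspaces with $\{0\}\subsetneq\mathcal{F}_1\subsetneq\cdots\subsetneq\mathcal{F}_r\subsetneq\mathbb{F}_{q^n}$. For $\beta\in\mathbb{F}_{q^n}^*$ of multiplicative order $|\beta|$, $\mathcal{U}\beta=\{u\beta:u\in\mathcal{U}\}$, $\mathcal{F}\beta=(\mathcal{F}_1\beta,\ldots,\mathcal{F}_r\beta)$, $\mathrm{Orb}_\beta(\mathcal{F})=\{\mathcal{F}\beta^j:0\le j\le|\beta|-1\}$, $\mathrm{Stab}_\beta(\mathcal{U})=\{\gamma\in\langle\beta\rangle:\mathcal{U}\gamma=\mathcal{U}\}$ and $\mathrm{Stab}_\beta(\mathcal{F})=\{\gamma\in\langle\beta\rangle:\mathcal{F}\gamma=\mathcal{F}\}$. For a set $\mathcal{C}$ of flags of type $(t_1,\ldots,t_r)$,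 its $i$-th projected code $\mathcal{C}_i$ is the set of $i$-th subspaces of its flags; $\mathcal{C}$ is disjoint if $|\mathcal{C}_1|=\cdots=|\mathcal{C}_r|=|\mathcal{C}|$. *)

(* Defs.v *)
From HB Require Import structures.
From mathcomp Require Import all_boot all_order all_algebra all_fingroup all_field.
Set Implicit Arguments. Unset Strict Implicit. Unset Printing Implicit Defensive.
Import GRing.Theory.
Local Open Scope ring_scope.

(* F_q is an arbitrary finite field F (q := #|F|, automatically a prime power);
   F_{q^n} is a finite field extension L of F (n := \dim {:L}); we use the
   alias finvect_type L, which carries the canonical finFieldType structure,
   so that the multiplicative group {unit _} is a finGroupType. *)

Section Flags.
Variables (F : finFieldType) (L : fieldExtType F).
Local Notation fL := (finvect_type L).

Definition vsmul (U : {vspace fL}) (b : fL) : {vspace fL} := (amulr b @: U)%VS.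

Definition vsproper (U V : {vspace fL}) : bool := (U <= V)%VS && (U != V).

Definition is_flag (s : seq {vspace fL}) : bool :=
  match s with
  | [::] => true
  | U :: _ => [&& vsproper 0%VS U, sorted vsproper s & vsproper (last U s) fullv]
  end.

Definition flagmul (s : seq {vspace fL}) (b : fL) : seq {vspace fL} :=
  [seq vsmul U b | U <- s].

Definition orbit_flag (s : seq {vspace fL}) (b : {unit fL}) : seq (seq {vspace fL}) :=
  [seq flagmul s (val (b ^+ j)%g) | j <- iota 0 #[b]%g].

(* i-th projected code (0-indexed) of a list of flags *)
Definition proj_code (C : seq (seq {vspace fL})) (i : nat) : seq {vspace fL} :=
  [seq nth 0%VS f i | f <- C].

Definition disjoint_code (r : nat) (C : seq (seq {vspace fL})) : Prop :=
  forall i, (i < r)%N -> size (undup (proj_code C i)) = size (undup C).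

Definition stab_vs (b : {unit fL}) (U : {vspace fL}) : {set {unit fL}} :=
  [set g in <[b]>%g | vsmul U (val g) == U].

Definition stab_flag (b : {unit fL}) (s : seq {vspace fL}) : {set {unit fL}} :=
  [set g in <[b]>%g | flagmul s (val g) == s].

End Flags.

(* Main.v *)
Require Import Defs.
From mathcomp Require Import all_boot all_order all_algebra all_fingroup all_field.
Set Implicit Arguments. Unset Strict Implicit. Unset Printing Implicit Defensive.
Import GRing.Theory.
Local Open Scope ring_scope.

Lemma undup_size_inj (T1 T2 : eqType) (f : T1 -> T2) (s : seq T1) :
  size (undup (map f s)) = size (undup s) <-> {in s &, injective f}.
Proof.
have E : undup (map f s) =i map f (undup s).
  by move=> z; rewrite mem_undup; apply/mapP/mapP=> -[x xs ->]; exists x; rewrite ?mem_undup in xs *.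
split.
- move=> H x y xs ys fxy; apply/eqP/negPn/negP => nxy.
  have : (size (undup (map f s)) <= size (map f (rem y (undup s))))%N.
    apply: uniq_leq_size; first exact: undup_uniq.
    move=> z; rewrite mem_undup => /mapP [w ws ->].
    have uu := undup_uniq s.
    case: (eqVneq w y) => [->|wy]; apply/mapP.
      by exists x; rewrite // mem_rem_uniq // inE nxy mem_undup.
    by exists w; rewrite // mem_rem_uniq // inE wy mem_undup.
  rewrite size_map size_rem ?mem_undup // H.
  have : (0 < size (undup s))%N by case: (undup s) (mem_undup s y) => //; rewrite ys.
  by case: (size _) => // n _ /=; rewrite ltnn.
- move=> inj; rewrite (perm_size (uniq_perm (undup_uniq _) _ E)) ?size_map //.
  rewrite map_inj_in_uniq ?undup_uniq // => x y; rewrite !mem_undup; exact: inj.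
Qed.

Section H.
Variables (F : finFieldType) (L : fieldExtType F).
Local Notation fL := (finvect_type L).

Lemma vsmul1 (U : {vspace fL}) : vsmul U 1 = U.
Proof.
rewrite /vsmul; suff -> : amulr (1 : fL) = \1%VF by rewrite lim1g.
by apply/lfunP => v; rewrite !lfunE /= mulr1.
Qed.

Lemma vsmulM (U : {vspace fL}) x y : vsmul (vsmul U x) y = vsmul U (x * y).
Proof.
rewrite /vsmul -limg_comp; congr (_ @: _)%VS.
by apply/lfunP => v; rewrite comp_lfunE !lfunE /= mulrA.
Qed.

Lemma vsmul0 (x : fL) : vsmul 0 x = 0%VS.
Proof. exact: limg0. Qed.

Lemma flagmul1 s : flagmul s (1 : fL) = s.
Proof. by rewrite /flagmul (eq_map (@vsmul1)) map_id. Qed.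

Lemma flagmulM s (x y : fL) : flagmul (flagmul s x) y = flagmul s (x * y).
Proof. by rewrite /flagmul -map_comp; apply: eq_map => U /=; rewrite vsmulM. Qed.

Lemma nth_flagmul s (g : fL) i : (i < size s)%N ->
  nth 0%VS (flagmul s g) i = vsmul (nth 0%VS s i) g.
Proof. by move=> lt; rewrite /flagmul (nth_map 0%VS). Qed.

Lemma stab_flag_sub (b : {unit fL}) s i : (i < size s)%N ->
  stab_flag b s \subset stab_vs b (nth 0%VS s i).
Proof.
move=> lt; apply/subsetP => g; rewrite !inE => /andP [-> /eqP E] /=.
by rewrite -nth_flagmul // E.
Qed.

Lemma disj_iff (b : {unit fL}) s :
  disjoint_code (size s) (orbit_flag s b) <->
  (forall i, (i < size s)%N -> stab_vs b (nth 0%VS s i) \subset stab_flag b s).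
Proof.
rewrite /disjoint_code /proj_code.
split => H i lt; have := H i lt.
- move/undup_size_inj => inj; apply/subsetP => g; rewrite !inE => /andP [gb /eqP E].
  rewrite gb /=.
  move/cycleP: gb => [m gm]; subst g; rewrite -expg_mod_order.
  have mo : (m %% #[b]%g < #[b]%g)%N by rewrite ltn_pmod // order_gt0.
  apply/eqP; rewrite -[RHS](flagmul1 s) -(FinRing.val_unit1 fL).
  rewrite -(expg0 b).
  apply: inj.
  + by apply/mapP; exists (m %% #[b]%g)%N; rewrite // mem_iota.
  + by apply/mapP; exists 0%N; rewrite // mem_iota order_gt0.
  rewrite expg0 FinRing.val_unit1 !nth_flagmul // vsmul1.
  by rewrite expg_mod_order.
- move=> sub; apply/undup_size_inj => f1 f2 /mapP [j _ ->] /mapP [k _ ->].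
  rewrite !nth_flagmul // => E.
  set x := (b ^+ j)%g; set y := (b ^+ k)%g.
  have gin : (x * y^-1)%g \in stab_vs b (nth 0%VS s i).
    rewrite inE groupM ?groupV ?mem_cycle //=.
    rewrite -vsmulM; move: E; rewrite -/x -/y /= => ->.
    rewrite vsmulM mulrV ?vsmul1 //; exact: (valP y).
  move/subsetP: sub => /(_ _ gin); rewrite inE => /andP [_ /eqP E2].
  by rewrite -{1}(mulgKV y x) FinRing.val_unitM -flagmulM E2.
Qed.



Lemma B_to_A (b : {unit fL}) s :
  (forall i, (i < size s)%N -> stab_vs b (nth 0%VS s i) = stab_vs b (nth 0%VS s 0)) ->
  stab_flag b s = stab_vs b (nth 0%VS s 0).
Proof.
move=> H; apply/setP => g; rewrite !inE.
case gb: (g \in <[b]>%g) => //=.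
case: (posnP (size s)) => [/size0nil -> | sp].
  by rewrite /flagmul /= vsmul0 !eqxx.
apply/eqP/eqP => [E | E0].
  by rewrite -nth_flagmul // E.
apply: (@eq_from_nth _ 0%VS); first by rewrite size_map.
move=> i; rewrite size_map => lt; rewrite nth_flagmul //.
have : g \in stab_vs b (nth 0%VS s i) by rewrite H // inE gb E0 eqxx.
by rewrite inE => /andP [_ /eqP].
Qed.

End H.

Theorem proposition4p18 (F : finFieldType) (L : fieldExtType F)
  (s : seq {vspace finvect_type L}) (b : {unit finvect_type L}) :
  is_flag s ->
  let r := size s in
  let stabi := fun i => stab_vs b (nth 0%VS s i) in
  (disjoint_code r (orbit_flag s b) <->
     (stab_flag b s = stabi 0%N /\ forall i, (i < r)%N -> stabi i = stabi 0%N)) /\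
  ((stab_flag b s = stabi 0%N /\ forall i, (i < r)%N -> stabi i = stabi 0%N) <->
     (forall i, (i < r)%N -> stabi i = stabi 0%N)).
Proof.
move=> _ r stabi.
have P2 : (stab_flag b s = stabi 0%N /\ forall i, (i < r)%N -> stabi i = stabi 0%N) <->
     (forall i, (i < r)%N -> stabi i = stabi 0%N).
  by split => [[] // | H]; split => //; apply: B_to_A.
split => //; split => [/disj_iff H | /P2 H]; [apply/P2 | apply/disj_iff] => i lt.
- have r0 : (0 < r)%N by apply: leq_ltn_trans lt.
  have e : forall k, (k < r)%N -> stabi k = stab_flag b s.
    by move=> k kr; apply/eqP; rewrite eqEsubset H // stab_flag_sub.
  by rewrite !e.
- have r0 : (0 < r)%N by apply: leq_ltn_trans lt.
  by have := H i lt; rewrite /stabi => ->; rewrite -(B_to_A H) subxx.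
Qed.
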